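(* Let $X$ be a compact Hausdorff space and let $a\in\mathrm{M}_m(\mathrm{C}(X))$ be block diagonal, $a=\mathrm{diag}(0_k,a_1,\dots,a_n)$, where $0_k$ is the $k\times k$ zero matrix and $a_i\in\mathrm{M}_{k_i}(\mathrm{C}(X))$ for natural numbers $k_1,\dots,k_n$ with $k+\sum_i k_i=m$. If $k>\max_{1\le i\le n}k_i$, then $a$ can be approximated arbitrarily closely in norm by invertible elements of $\mathrm{M}_m(\mathrm{C}(X))$. *)

(* Defs.v *)
(* Complex numbers are R[i] (mathcomp-real-closed)
   over an arbitrary R : realType; R[i] is a numFieldType, hence carries its
   canonical normed (metric) topology via numFieldNormedType. *)
From HB Require Import structures.
From mathcomp Require Import all_boot all_order all_algebra.
From mathcomp Require Import all_classical all_reals topology normedtype.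
From mathcomp Require Import complex.
Set Implicit Arguments. Unset Strict Implicit. Unset Printing Implicit Defensive.
Import Order.TTheory GRing.Theory Num.Theory.
Import numFieldNormedType.Exports.
Local Open Scope classical_set_scope.
Local Open Scope ring_scope.

Section Defs.
Variable R : realType.
Local Notation C := R[i].

Definition vnorm m (v : 'cV[C]_m) : R :=
  Num.sqrt (\sum_(i < m) ((complex.Re (v i ord0)) ^+ 2 + (complex.Im (v i ord0)) ^+ 2)).

Definition opnorm m (A : 'M[C]_m) : R :=
  sup [set vnorm (A *m v) | v in [set v : 'cV[C]_m | vnorm v <= 1]].

Variable X : topologicalType.

(* An element of M_m(C(X)), represented as a function X -> M_m(C)
   all of whose entries are continuous. *)
Definition is_CXmx m (f : X -> 'M[C]_m) : Prop :=
  forall i j : 'I_m, continuous (fun x => (f x i j : (R[i])^o)).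

Definition CXmx_norm m (f : X -> 'M[C]_m) : R :=
  sup [set opnorm (f x) | x in [set: X]].

Definition CXmx_invertible m (f : X -> 'M[C]_m) : Prop :=
  exists g : X -> 'M[C]_m, is_CXmx g /\
    (forall x, f x *m g x = 1%:M) /\ (forall x, g x *m f x = 1%:M).

End Defs.

(* Main.v *)
Require Import Defs.
From HB Require Import structures.
From mathcomp Require Import all_boot all_order all_algebra all_fingroup.
From mathcomp Require Import all_classical all_reals topology normedtype.
From mathcomp Require Import complex zify ring.
Import Order.TTheory GRing.Theory Num.Theory.
Import numFieldNormedType.Exports.
Local Open Scope classical_set_scope.
Local Open Scope ring_scope.
Set Implicit Arguments. Unset Strict Implicit.

Section Cont.
Variable R : realType.
Variable X : topologicalType.
Local Notation C := R[i].

Definition ccont (f : X -> C) := continuous (fun x => (f x : C^o)).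

Lemma ccont_cst (c : C) : ccont (fun _ => c).
Proof. exact: cst_continuous. Qed.

Lemma ccontD f g : ccont f -> ccont g -> ccont (fun x => f x + g x).
Proof. by move=> hf hg x; apply: continuousD; [apply: hf|apply: hg]. Qed.

Lemma ccontM f g : ccont f -> ccont g -> ccont (fun x => f x * g x).
Proof. by move=> hf hg x; apply: continuousM; [apply: hf|apply: hg]. Qed.

Lemma ccont_sum (I : Type) (r : seq I) (P : pred I) (f : I -> X -> C) :
  (forall i, ccont (f i)) -> ccont (fun x => \sum_(i <- r | P i) f i x).
Proof.
move=> hf; elim: r => [|a r IH].
  by under eq_fun do rewrite big_nil; exact: ccont_cst.
under eq_fun do rewrite big_cons.
case: (P a) => //; exact: ccontD.
Qed.

Lemma CX_D m (f g : X -> 'M[C]_m) : is_CXmx f -> is_CXmx g -> is_CXmx (fun x => f x + g x).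
Proof. move=> hf hg i j. under eq_fun do rewrite mxE. exact: ccontD. Qed.

Lemma CX_M m (f g : X -> 'M[C]_m) : is_CXmx f -> is_CXmx g -> is_CXmx (fun x => f x *m g x).
Proof.
move=> hf hg i j. under eq_fun do rewrite mxE.
apply: ccont_sum => l; exact: ccontM.
Qed.

Lemma CX_cst m (A : 'M[C]_m) : is_CXmx (fun _ : X => A).
Proof. move=> i j; exact: ccont_cst. Qed.

Lemma CX_Z m (c : C) (f : X -> 'M[C]_m) : is_CXmx f -> is_CXmx (fun x => c *: f x).
Proof. move=> hf i j. under eq_fun do rewrite mxE. apply: ccontM => //; exact: ccont_cst. Qed.

Lemma CX_X m (f : X -> 'M[C]_m) p : is_CXmx f -> is_CXmx (fun x => f x ^+ p).
Proof.
move=> hf; elim: p => [|p IH].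
  under eq_fun do rewrite expr0; exact: CX_cst.
under eq_fun do rewrite exprS; exact: CX_M.
Qed.

Lemma CX_sum m (I : Type) (r : seq I) (P : pred I) (f : I -> X -> 'M[C]_m) :
  (forall i, is_CXmx (f i)) -> is_CXmx (fun x => \sum_(i <- r | P i) f i x).
Proof.
move=> hf i j; under eq_fun do rewrite summxE.
apply: ccont_sum => l; exact: hf.
Qed.
End Cont.

Section Diag.
Variable R : realType.
Variable X : topologicalType.
Local Notation C := R[i].
Variables (n : nat) (ks : 'I_n -> nat).

Lemma mxdiag_entry (B : forall i, 'M[C]_(ks i)) u v :
  (\mxdiag_i B i) u v = if tagnat.sig1 u == tagnat.sig1 v then
     conform_mx 0 (B (tagnat.sig1 u)) (tagnat.sig2 u) (tagnat.sig2 v) else 0.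
Proof. by rewrite /mxdiag /mxblock mxE; case: (_ == _) => //; rewrite mxE. Qed.

Lemma mxdiag_sparse (K : nat) (B : forall i, 'M[C]_(ks i)) u v :
  (forall i, (ks i <= K)%N) ->
  (\mxdiag_i B i) u v != 0 -> (u < v + K)%N.
Proof.
move=> hK; rewrite mxdiag_entry; case: (tagnat.sig1 u =P tagnat.sig1 v) => [e|]; last by rewrite eqxx.
move=> _.
have hu := tagnat.rect u; have hv := tagnat.rect v.
have su := ltn_ord (tagnat.sig2 u).
have hs : (\sum_(i < n | (i < tagnat.sig1 v)%N) ks i = \sum_(i < n | (i < tagnat.sig1 u)%N) ks i)%N
  by rewrite e.
have := hK (tagnat.sig1 u).
rewrite hs in hv. lia.
Qed.

Lemma conform_cases (m1 n1 m2 n2 : nat) (F : X -> 'M[C]_(m1, n1)) (r : 'I_m2) (c : 'I_n2) :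
  (forall x, conform_mx (0 : 'M[C]_(m2, n2)) (F x) r c = 0) \/
  exists (r' : 'I_m1) (c' : 'I_n1), forall x, conform_mx (0 : 'M[C]_(m2, n2)) (F x) r c = F x r' c'.
Proof.
rewrite /conform_mx; case: (m1 =P m2) => e1; case: (n1 =P n2) => e2.
- by right; exists (cast_ord (esym e1) r), (cast_ord (esym e2) c) => x; rewrite castmxE.
all: by left => x; rewrite mxE.
Qed.

Lemma ccont_ext (f g : X -> C) : (forall x, f x = g x) -> ccont g -> ccont f.
Proof. by move=> e; have -> : f = g by apply: funext. Qed.

Lemma mxdiag_cont (a_ : forall i : 'I_n, X -> 'M[C]_(ks i)) :
  (forall i, is_CXmx (a_ i)) -> is_CXmx (fun x => \mxdiag_i a_ i x).
Proof.
move=> ha u v; change (ccont (fun x => (\mxdiag_i a_ i x) u v)).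
case: (tagnat.sig1 u =P tagnat.sig1 v) => e; last first.
  apply: (@ccont_ext _ (fun _ => 0)); last exact: ccont_cst.
  by move=> x; rewrite mxdiag_entry (introF eqP e).
have [h|[r [c h]]] := conform_cases (a_ (tagnat.sig1 u)) (tagnat.sig2 u) (tagnat.sig2 v).
  apply: (@ccont_ext _ (fun _ => 0)); last exact: ccont_cst.
  by move=> x; rewrite mxdiag_entry (introT eqP e) h.
apply: (@ccont_ext _ (fun x => a_ (tagnat.sig1 u) x r c)); last exact: ha.
by move=> x; rewrite mxdiag_entry (introT eqP e) h.
Qed.
End Diag.

Section Block.
Variable R : realType.
Variable X : topologicalType.
Local Notation C := R[i].
Variables (k s : nat).

Lemma block_cont (D : X -> 'M[C]_s) : is_CXmx D ->
  is_CXmx (fun x => (block_mx 0 0 0 (D x) : 'M[C]_(k + s))).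
Proof.
move=> hD u v; change (ccont (fun x => (block_mx 0 0 0 (D x) : 'M[C]_(k + s)) u v)).
rewrite -(@fintype.splitK k s u) -(@fintype.splitK k s v); case: (fintype.split u) => u'; case: (fintype.split v) => v' /=.
- apply: (@ccont_ext _ _ _ (fun _ => 0)); last exact: ccont_cst.
  by move=> x; rewrite block_mxEul mxE.
- apply: (@ccont_ext _ _ _ (fun _ => 0)); last exact: ccont_cst.
  by move=> x; rewrite block_mxEur mxE.
- apply: (@ccont_ext _ _ _ (fun _ => 0)); last exact: ccont_cst.
  by move=> x; rewrite block_mxEdl mxE.
- apply: (@ccont_ext _ _ _ (fun x => D x u' v')); last exact: hD.
  by move=> x; rewrite block_mxEdr.
Qed.

Lemma block_sparse (D : 'M[C]_s) u v :
  (forall u v, D u v != 0 -> (u < v + k)%N) ->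
  (block_mx 0 0 0 D : 'M[C]_(k + s)) u v != 0 -> (k <= u)%N /\ (u < v + k)%N.
Proof.
move=> hD.
rewrite -(@fintype.splitK k s u) -(@fintype.splitK k s v); case: (fintype.split u) => u'; case: (fintype.split v) => v' /=.
- by rewrite block_mxEul mxE eqxx.
- by rewrite block_mxEur mxE eqxx.
- by rewrite block_mxEdl mxE eqxx.
rewrite block_mxEdr => /hD; lia.
Qed.
End Block.

Section Rot.
Variables (m k : nat).

Definition rotf (i : 'I_m) : 'I_m :=
  Ordinal (ltn_pmod (i + k) (leq_ltn_trans (leq0n i) (ltn_ord i))).

Lemma rotf_inj : injective rotf.
Proof.
move=> i j /(congr1 val) /= /eqP; rewrite eqn_modDr => /eqP.
by rewrite !modn_small // => /val_inj.
Qed.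

Definition rotp : 'S_m := perm.perm rotf_inj.

Lemma rotpE i : (rotp i : nat) = ((i + k) %% m)%N.
Proof. by rewrite /rotp permE. Qed.
End Rot.

Section Nil.
Variable F : pzRingType.

Lemma upper_pow (m : nat) (N : 'M[F]_m) :
  (forall i j, N i j != 0 -> (i < j)%N) ->
  forall p i j, (N ^+ p) i j != 0 -> (i + p <= j)%N.
Proof.
move=> hN; elim=> [|p IH] i j.
  rewrite expr0 mxE addn0; case: (i =P j) => [->|]; first by rewrite leqnn.
  by rewrite eqxx.
rewrite exprS mxE; apply: contraNT => hij.
rewrite big1 // => l _.
have [h1|h1] := eqVneq (N i l) 0; first by rewrite h1 mul0r.
have [h2|h2] := eqVneq ((N ^+ p) l j) 0; first by rewrite h2 mulr0.
have := hN _ _ h1; have := IH _ _ h2; lia.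
Qed.

Lemma upper_nil (m : nat) (N : 'M[F]_m) :
  (forall i j, N i j != 0 -> (i < j)%N) -> N ^+ m = 0.
Proof.
move=> hN; apply/matrixP => i j; rewrite [RHS]mxE.
apply/eqP; apply: contraTT (ltn_ord j) => /(upper_pow hN); rewrite -leqNgt.
move=> h; apply: leq_trans h; exact: leq_addl.
Qed.
End Nil.

Section Norm.
Variable R : realType.
Local Notation C := R[i].

Lemma ReIm_scale (c : R) (z : C) :
  complex.Re (-(Complex c 0 * z))^+2 + complex.Im (-(Complex c 0 * z))^+2
  = c^+2 * (complex.Re z ^+2 + complex.Im z^+2).
Proof. case: z => x y /=. ring. Qed.

Lemma vnorm_scale_perm m (c : R) (t : 'S_m) (v : 'cV[C]_m) :
  vnorm (-(Complex c 0 *: perm_mx t) *m v) = `|c| * vnorm v.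
Proof.
rewrite mulNmx -scalemxAl -row_permE /vnorm.
under eq_bigr do rewrite !mxE ReIm_scale.
rewrite -mulr_sumr (reindex_inj (@perm_inj _ t^-1)) /=.
under eq_bigr do rewrite permKV.
rewrite sqrtrM ?sqr_ge0 // sqrtr_sqr //.
Qed.

Lemma vnorm0 m : vnorm (0 : 'cV[C]_m) = 0.
Proof.
rewrite /vnorm big1 ?sqrtr0 // => i _; rewrite mxE /=. ring.
Qed.

Lemma opnorm_scale_perm m (c : R) (t : 'S_m) : 0 <= c ->
  opnorm (-(Complex c 0 *: perm_mx t)) <= c.
Proof.
move=> c0; rewrite /opnorm; apply: ge_sup.
  exists (vnorm ((-(Complex c 0 *: perm_mx t)) *m 0)), 0 => //=.
  by rewrite vnorm0 ler01.
move=> y [v hv <-]; rewrite vnorm_scale_perm ger0_norm //.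
rewrite -[leRHS]mulr1; apply: ler_wpM2l => //.
Qed.
End Norm.
Unset Implicit Arguments. Set Strict Implicit.

Lemma rot_sparse (C : pzRingType) (k s : nat) (A : 'M[C]_(k + s)) :
  (forall u v, A u v != 0 -> (k <= u)%N /\ (u < v + k)%N) ->
  forall i j, (perm_mx (rotp (k + s) k) *m A) i j != 0 -> (i < j)%N.
Proof.
move=> hA i j; rewrite -row_permE mxE => /hA; rewrite rotpE.
have hi := ltn_ord i.
case: (ltnP (i + k) (k + s)) => h.
  rewrite modn_small //; lia.
have e : (i + k = (i + k - (k + s)) + (k + s))%N by lia.
rewrite e modnDr modn_small; lia.
Qed.

Theorem lemma4p2 (R : realType) (X : topologicalType)
    (hcpt : compact [set: X]) (hT2 : hausdorff_space X)
    (k n : nat) (ks : 'I_n -> nat)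
    (a_ : forall i : 'I_n, X -> 'M[R[i]]_(ks i))
    (ha : forall i : 'I_n, is_CXmx (a_ i))
    (hk : (\max_(i < n) ks i < k)%N) :
  let a : X -> 'M[R[i]]_(k + \sum_(i < n) ks i) :=
    fun x => block_mx 0 0 0 (\mxdiag_(i < n) a_ i x) in
  forall eps : R, 0 < eps ->
  exists b : X -> 'M[R[i]]_(k + \sum_(i < n) ks i),
    is_CXmx b /\ CXmx_invertible b /\ CXmx_norm (fun x => a x - b x) < eps.
Proof.
move=> a eps heps.
have hks : forall i, (ks i <= k)%N.
  move=> i; apply: ltnW; apply: leq_ltn_trans hk; exact: leq_bigmax.
pose m := (k + \sum_(i < n) ks i)%N.
pose P : 'M[R[i]]_m := perm_mx (rotp m k).
pose Q : 'M[R[i]]_m := perm_mx (rotp m k)^-1.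
pose d : R[i] := Complex (eps / 2) 0.
have d0 : d != 0.
  apply/eqP => /(congr1 (@complex.Re R)) /= /eqP.
  by rewrite gt_eqF // divr_gt0 // ltr0n.
pose b := fun x => a x + d *: Q.
pose xx := fun x => (-(d^-1))%:M *m (P *m a x).
pose g := fun x => (\sum_(p < m) xx x ^+ p) *m (d^-1)%:M *m P.
have acont : is_CXmx a.
  rewrite /a; apply: (@block_cont R X k (\sum_(i < n) ks i)).
  exact: mxdiag_cont.
exists b; split; [|split].
- apply: CX_D; [exact: acont | exact: CX_cst].
- exists g; split.
    apply: CX_M; last exact: CX_cst.
    apply: CX_M; last exact: CX_cst.
    apply: CX_sum => p; apply: CX_X; apply: CX_M; first exact: CX_cst.
    apply: CX_M; [exact: CX_cst | exact: acont].
  have bg : forall x, b x *m g x = 1%:M.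
    move=> x.
    have sp : forall u v, a x u v != 0 -> (k <= u)%N /\ (u < v + k)%N.
      move=> u v; apply: block_sparse => u' v'.
      exact: mxdiag_sparse hks.
    have hN : forall i j, xx x i j != 0 -> (i < j)%N.
      move=> i j; rewrite /xx mul_scalar_mx mxE mulf_eq0 negb_or => /andP[_].
      exact: (@rot_sparse _ k (\sum_(i < n) ks i) (a x) sp).
    have nil := upper_nil hN.
    have hS : (1 - xx x) * (\sum_(p < m) xx x ^+ p) = 1.
      by rewrite -opprB mulNr -subrX1 nil sub0r opprK.
    have hb : b x = Q *m (d%:M *m (1%:M - xx x)).
      rewrite mulmxBr mulmx1 /xx mulmxA -scalar_mxM mulrN mulfV // mul_scalar_mx scaleN1r.
      rewrite opprK mulmxDr mul_mx_scalar mulmxA /Q /P -perm_mxM mulVg perm_mx1 mul1mx.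
      by rewrite /b addrC.
    rewrite hb /g.
    change (Q * (d%:M * (1 - xx x)) * ((\sum_(p < m) xx x ^+ p) * (d^-1)%:M * P) = 1).
    rewrite -!mulrA (mulrA (1 - xx x)) hS mul1r.
    change (Q *m (d%:M *m ((d^-1)%:M *m P)) = 1%:M).
    rewrite [d%:M *m _]mulmxA -scalar_mxM mulfV // mul1mx /Q /P -perm_mxM mulVg.
    exact: perm_mx1.
  by split => // x; apply: mulmx1C; apply: bg.
- have e : (fun x => a x - b x) = fun _ => -(d *: Q).
    by apply: funext => x; rewrite /b opprD addrA subrr add0r.
  rewrite e /CXmx_norm.
  have he2 : 0 <= eps / 2 by rewrite divr_ge0 // ltW.
  have hlt : eps / 2 < eps by rewrite ltr_pdivrMr // ltr_pMr // ltr1n.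
  case: (pselect (exists x : X, True)) => [[x0 _]|hX].
    apply: le_lt_trans hlt; apply: ge_sup.
      by exists (opnorm (-(d *: Q))), x0.
    move=> y [x _ <-]; exact: opnorm_scale_perm.
  rewrite (_ : [set _ | x in [set: X]] = set0) ?sup0 //.
  by apply/seteqP; split => y // [x _ _]; apply: hX; exists x.
Qed.
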